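(* Let $A$ be a real $m\times n$ matrix of rank $\rho$ with columns $a_1,\ldots,a_n$, and let $A=USV^*$ be its thin singular value decomposition, where $U$ ($m\times\rho$) and $V$ ($n\times\rho$) have orthonormal columns and $S=\mathrm{diag}(s_1,\ldots,s_\rho)$ with $s_1\ge\cdots\ge s_\rho\ge 0$; set $s_{\rho+1}:=0$. For $k\in[\rho]$ let $U_{[k]}$ denote the $m\times k$ matrix of the first $k$ columns of $U$ and define $F_k:\mathbb R^m\to\mathbb R^k$ by $F_k(v)=(U_{[k]})^*v$. Then $$\sup_{i,j\in[n]}\Big|\,\|a_i-a_j\|-\|F_k(a_i)-F_k(a_j)\|\,\Big|\le 2s_{k+1},$$ i.e. $F_k$ is a $2s_{k+1}$-distortion of the set of columns of $A$.
   Context: Norms on vectors are Euclidean; $[k]=\{1,\ldots,k\}$; $^*$ denotes transpose. A map $F$ on a set $\mathcal A$ is a $\mu$-distortion of $\mathcal A$ if $\sup_{x,y\in\mathcal A}|\,\|x-y\|-\|F(x)-F(y)\|\,|\le\mu$. *)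

(* Defs.v *)
From HB Require Import structures.
From mathcomp Require Import all_boot all_order all_algebra.
From mathcomp Require Import reals.
Set Implicit Arguments. Unset Strict Implicit. Unset Printing Implicit Defensive.
Import Order.TTheory GRing.Theory Num.Theory.
Local Open Scope ring_scope.

Definition vnorm (R : realType) (p : nat) (v : 'cV[R]_p) : R :=
  Num.sqrt (\sum_(i < p) v i 0 ^+ 2).

Definition is_distortion (R : realType) (p q : nat)
  (X : 'cV[R]_p -> Prop) (F : 'cV[R]_p -> 'cV[R]_q) (mu : R) : Prop :=
  forall x y, X x -> X y -> `| vnorm (x - y) - vnorm (F x - F y) | <= mu.

Definition first_cols (R : realType) (m r k : nat) (U : 'M[R]_(m, r))
  (hk : (k <= r)%N) : 'M[R]_(m, k) :=
  \matrix_(i < m, j < k) U i (widen_ord hk j).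

(* singular values extended by 0: index j (0-based) gives s_{j+1}; zero past r *)
Definition sv_ext (R : realType) (r : nat) (s : 'rV[R]_r) (j : nat) : R :=
  match @insub nat (fun x => (x < r)%N) 'I_r j with
  | Some i => s 0 i
  | None => 0
  end.

(* Main.v *)
Require Import Defs.
From HB Require Import structures.
From mathcomp Require Import all_boot all_order all_algebra.
From mathcomp Require Import reals.
From mathcomp Require Import lra.
Import Order.TTheory GRing.Theory Num.Theory.
Local Open Scope ring_scope.

Lemma sqE {R : realType} {p} (v : 'cV[R]_p) : (v^T *m v) 0 0 = \sum_i v i 0 ^+ 2.
Proof. rewrite !mxE; apply: eq_bigr => i _; by rewrite !mxE expr2. Qed.

Lemma sq_ge0 {R : realType} {p} (v : 'cV[R]_p) : 0 <= (v^T *m v) 0 0.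
Proof. rewrite sqE; apply: sumr_ge0 => i _; exact: sqr_ge0. Qed.

Lemma proj_le {R : realType} {n r} (V : 'M[R]_(n, r)) (hV : V^T *m V = 1%:M)
  (d : 'cV[R]_n) : ((V^T *m d)^T *m (V^T *m d)) 0 0 <= (d^T *m d) 0 0.
Proof.
set x := V^T *m d.
have h := sq_ge0 (d - V *m x).
have e : (d - V *m x)^T *m (d - V *m x) = d^T *m d - x^T *m x.
  rewrite (linearB (@trmx R n 1)) /= mulmxBr !mulmxBl trmx_mul.
  have e1 : d^T *m (V *m x) = x^T *m x by rewrite /x trmx_mul trmxK !mulmxA.
  have e2 : x^T *m V^T *m d = x^T *m x by rewrite -mulmxA.
  have e3 : x^T *m V^T *m (V *m x) = x^T *m x by rewrite mulmxA -(mulmxA _ V^T) hV mulmx1.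
  by rewrite e1 e2 e3 subrr subr0.
move: h; rewrite e. rewrite [X in 0 <= X]mxE [X in 0 <= _ + X]mxE subr_ge0. done.
Qed.

Lemma delta_le {R : realType} {n} (i j : 'I_n) (d : 'cV[R]_n)
  (hd : d = delta_mx i 0 - delta_mx j 0) : (d^T *m d) 0 0 <= 2.
Proof.
rewrite sqE.
apply: (@le_trans _ _ (\sum_l ((l == i)%:R + (l == j)%:R : R))).
  apply: ler_sum => l _; rewrite hd !mxE !eqxx !andbT.
  case: (l == i); case: (l == j) => /=; lra.
have s1 : forall k : 'I_n, \sum_l ((l == k)%:R : R) = 1.
  by move=> k; rewrite (bigD1 k) //= eqxx big1 ?addr0 // => l /negbTE ->.
rewrite big_split /= !s1; lra.
Qed.
Lemma fin_ineq {R : realType} (p q B sg : R) : 0 <= p -> 0 <= q -> 0 <= sg -> 0 <= B ->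
  p ^+ 2 = q ^+ 2 + B -> B <= 2 * sg ^+ 2 -> `| p - q | <= 2 * sg.
Proof.
move=> *; rewrite ger0_norm; nra.
Qed.

Theorem lemma2 (R : realType) (m n : nat) (A : 'M[R]_(m, n))
  (U : 'M[R]_(m, \rank A)) (V : 'M[R]_(n, \rank A)) (s : 'rV[R]_(\rank A))
  (hU : U^T *m U = 1%:M) (hV : V^T *m V = 1%:M)
  (hs_nonneg : forall i, 0 <= s 0 i)
  (hs_sorted : forall i j : 'I_(\rank A), (i <= j)%N -> s 0 j <= s 0 i)
  (hsvd : A = U *m diag_mx s *m V^T)
  (k : nat) (hk1 : (1 <= k)%N) (hk : (k <= \rank A)%N) :
  is_distortion (fun x => exists i : 'I_n, x = col i A)
    (fun v : 'cV[R]_m => (first_cols U hk)^T *m v)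
    (2 * sv_ext s k).
Proof.
move=> x0 y0 [i ->] [j ->].
set d := (delta_mx i 0 - delta_mx j 0 : 'cV[R]_n).
set x := V^T *m d. set w := diag_mx s *m x.
have hA : A *m d = (U *m diag_mx s *m V^T) *m d by rewrite -hsvd.
have hD : col i A - col j A = U *m w by rewrite !colE -mulmxBr hA /w /x !mulmxA.
rewrite -mulmxBr hD /vnorm.
have hF : forall b, ((first_cols U hk)^T *m (U *m w)) b 0 = w (widen_ord hk b) 0.
  have hw' : U^T *m (U *m w) = w by rewrite mulmxA hU mul1mx.
  move=> b; rewrite -{2}hw' !mxE; apply: eq_bigr => a _; by rewrite !mxE.
have hN : (U *m w)^T *m (U *m w) = w^T *m w.
  by rewrite trmx_mul -mulmxA (mulmxA U^T) hU mul1mx.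
have e1 : \sum_(l < m) (U *m w) l 0 ^+ 2 = \sum_l w l 0 ^+ 2 by rewrite -!sqE hN.
set def0 := widen_ord hk (Ordinal hk1).
set g : nat -> R := fun l => w (insubd def0 l) 0 ^+ 2.
have hg : forall o : 'I_(\rank A), g o = w o 0 ^+ 2.
  move=> o; rewrite /g; congr (w _ 0 ^+ 2); apply: val_inj; by rewrite val_insubd ltn_ord.
have e2 : \sum_(b < k) ((first_cols U hk)^T *m (U *m w)) b 0 ^+ 2
          = \sum_(l < \rank A | (l < k)%N) w l 0 ^+ 2.
  transitivity (\sum_(b < k) g b).
    by apply: eq_bigr => b _; rewrite hF -hg.
  rewrite (big_ord_widen (\rank A) g hk); apply: eq_bigr => l _; exact: hg.
rewrite e1 e2 (bigID (fun l : 'I_(\rank A) => (l < k)%N)) /=.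
set A2 := \sum_(l < \rank A | (l < k)%N) _.
set B2 := \sum_(l < \rank A | ~~ (l < k)%N) _.
have A2ge : 0 <= A2 by apply: sumr_ge0 => l _; exact: sqr_ge0.
have B2ge : 0 <= B2 by apply: sumr_ge0 => l _; exact: sqr_ge0.
have hx := proj_le V hV d.
have hd := delta_le i j d (erefl d).
have hsv : 0 <= sv_ext s k /\ B2 <= 2 * sv_ext s k ^+ 2.
  rewrite /sv_ext; case: insubP => [o _ vo | hno].
    split; first exact: hs_nonneg.
    have hw : forall l, w l 0 = s 0 l * x l 0 by move=> l; rewrite /w mul_diag_mx mxE.
    apply: (@le_trans _ _ (s 0 o ^+ 2 * \sum_l x l 0 ^+ 2)).
      rewrite mulr_sumr /B2 [X in _ <= X](bigID (fun l : 'I_(\rank A) => (l < k)%N)) /=.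
      rewrite -[X in X <= _]add0r; apply: lerD.
        apply: sumr_ge0 => l _; apply: mulr_ge0; exact: sqr_ge0.
      apply: ler_sum => l hl; rewrite hw exprMn; apply: ler_wpM2r; first exact: sqr_ge0.
      have hsl : s 0 l <= s 0 o by apply: hs_sorted; rewrite vo leqNgt.
      have := hs_nonneg l; nra.
    rewrite -sqE; have := hs_nonneg o; nra.
  split; first by [].
  rewrite /B2 big1; first by rewrite expr0n /= mulr0.
  move=> l /= hl; exfalso.
  by move: hno hl; rewrite -!leqNgt => h1 h2; move: (ltn_ord l); rewrite ltnNge (leq_trans h1 h2).
case: hsv => hs0 hB.
apply: (@fin_ineq R _ _ B2) => //; rewrite ?sqrtr_ge0 //.
by rewrite !sqr_sqrtr // addr_ge0.
Qed.
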